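(* In the supersample setting described in the context, let $\ell$ be the zero-one loss and let $\mathcal A$ be an interpolating algorithm. For each $i$, let $\alpha_i=P(\Delta L_i=0\mid U_i=0)$ (which equals $P(\Delta L_i=0\mid U_i=1)$). Then for each $i$, $I(\Delta L_i;U_i)=(1-\alpha_i)\ln 2$ nats, and \[ |\mathrm{Err}|=L_\mu=\sum_{i=1}^n\frac{I(\Delta L_i;U_i)}{n\ln 2}. \]
   Context: Let $\mathcal Z=\mathcal X\times\mathcal Y$ and let $\mu$ be a distribution on $\mathcal Z$. A (possibly randomized) learning algorithm $\mathcal A$ maps a training sample in $\mathcal Z^n$ to a hypothesis $W\in\mathcal W$ (described by $P_{W|S}$); each $w$ defines a predictor $f_w:\mathcal X\to\mathcal Y$. The zero-one loss is $\ell(w,(x,y))=\mathbb 1\{f_w(x)\neq y\}$. For $S=(Z_1,\dots,Z_n)\sim\mu^{n}$ and $W\sim P_{W|S}$, let $L_\mu=\mathbb E_W\mathbb E_{Z'\sim\mu}[\ell(W,Z')]$ (with $Z'$ independent of $(S,W)$), $L_S(w)=\frac1n\sum_{i}\ell(w,Z_i)$, $L_n=\mathbb E_{W,S}[L_S(W)]$, $\mathrm{Err}=L_\mu-L_n$. Supersample: $\widetilde Z=(\widetilde Z_{i,j})_{i\in\{1,\dots,n\},j\in\{0,1\}}$ with i.i.d. entries of law $\mu$; $U=(U_1,\dots,U_n)$ uniform on $\{0,1\}^n$, independent of $\widetilde Z$; $W=\mathcal A(\widetilde Z_U)$ where $\widetilde Z_U=(\widetilde Z_{1,U_1},\dots,\widetilde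 Z_{n,U_n})$. Put $L_{i,j}=\ell(W,\widetilde Z_{i,j})$, $L_i^+=L_{i,0}$, $L_i^-=L_{i,1}$, $\Delta L_i=L_i^- - L_i^+\in\{-1,0,1\}$. An algorithm is interpolating if it achieves zero training error, i.e. $\ell(W,\widetilde Z_{i,U_i})=0$ almost surely for every $i$. Mutual information is in nats. *)

(* Defs.v *)
From HB Require Import structures.
From mathcomp Require Import all_boot all_order all_algebra.
From mathcomp Require Import all_classical all_reals all_analysis.
Set Implicit Arguments. Unset Strict Implicit. Unset Printing Implicit Defensive.
Import Order.TTheory GRing.Theory Num.Theory.
Local Open Scope classical_set_scope.
Local Open Scope ring_scope.

(* Index set of the basic random variables of the supersample construction:
   the 2n supersample entries Zt i j, the n selector bits U i, and one
   fresh test point Z' (written Zp). *)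
Definition sidx (n : nat) := ((('I_n * bool) + 'I_n) + unit)%type.

Section defs.
Context {R : realType} {dO : measure_display} {Omega : measurableType dO}.

Definition rv_events {d} {T : measurableType d} (X : Omega -> T) : set (set Omega) :=
  [set A | exists B, measurable B /\ A = X @^-1` B].

Definition bool_events (X : Omega -> bool) : set (set Omega) :=
  [set A | exists B : set bool, A = X @^-1` B].

Definition mutually_independent {I : finType} (P : probability Omega R)
    (F : I -> set (set Omega)) : Prop :=
  forall (J : {set I}) (A : I -> set Omega),
    (forall k, k \in J -> F k (A k)) ->
    P (\bigcap_(k in [set k | k \in J]) A k) = (\prod_(k in J) P (A k))%E.

Definition prR (P : probability Omega R) (A : set Omega) : R := fine (P A).

(* Mutual information (in nats) between two discrete random variables X and Y
   whose values lie in the finite lists sx and sy (assumed duplicate-free and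
   covering the ranges), with the convention 0 ln 0 = 0. *)
Definition mutual_info {T1 T2 : eqType} (P : probability Omega R)
    (X : Omega -> T1) (Y : Omega -> T2) (sx : seq T1) (sy : seq T2) : R :=
  \sum_(x <- sx) \sum_(y <- sy)
    let pxy := prR P (X @^-1` [set x] `&` Y @^-1` [set y]) in
    let px := prR P (X @^-1` [set x]) in
    let py := prR P (Y @^-1` [set y]) in
    if pxy == 0 then 0 else pxy * ln (pxy / (px * py)).

End defs.

Definition zero_one_loss {R : realType} {W X : Type} {eY : eqType}
  (f : W -> X -> eY) (w : W) (z : X * eY) : R :=
  if f w z.1 != z.2 then 1 else 0.

Section supersample.
Context {R : realType} {dO : measure_display} {Omega : measurableType dO}
  {dX dY dW : measure_display} {X : measurableType dX} {Y : measurableType dY}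
  {Wt : measurableType dW} {n : nat}.
Variables (Zt : 'I_n -> bool -> Omega -> (X * Y)%type) (U : 'I_n -> Omega -> bool)
  (Zp : Omega -> (X * Y)%type) (W : Omega -> Wt) (f : Wt -> X -> Y).

(* the event classes of the basic random variables, indexed by sidx n
   (j = false stands for column 0, j = true for column 1) *)
Definition supersample_events (k : sidx n) : set (set Omega) :=
  match k with
  | inl (inl (i, j)) => rv_events (Zt i j)
  | inl (inr i) => bool_events (U i)
  | inr _ => rv_events Zp
  end.

Definition supersample_generators : set (set Omega) :=
  [set A | exists k, supersample_events k A].

Definition train_sample (w : Omega) : n.-tuple (X * Y)%type :=
  [tuple Zt i (U i w) w | i < n].

(* L_{i,j} = loss of W on Zt_{i,j};  L_i^+ = L_{i,0}, L_i^- = L_{i,1} *)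
Definition Lij (i : 'I_n) (j : bool) (w : Omega) : R :=
  zero_one_loss f (W w) (Zt i j w).

Definition DeltaL (i : 'I_n) (w : Omega) : R := Lij i true w - Lij i false w.

Definition alpha (P : probability Omega R) (i : 'I_n) : R :=
  prR P (DeltaL i @^-1` [set 0] `&` U i @^-1` [set false])
  / prR P (U i @^-1` [set false]).

Definition alpha1 (P : probability Omega R) (i : 'I_n) : R :=
  prR P (DeltaL i @^-1` [set 0] `&` U i @^-1` [set true])
  / prR P (U i @^-1` [set true]).

Definition MI_DeltaL_U (P : probability Omega R) (i : 'I_n) : R :=
  mutual_info P (DeltaL i) (U i) [:: -1; 0; 1] [:: false; true].

Definition L_mu (P : probability Omega R) : R :=
  fine (\int[P]_w (zero_one_loss f (W w) (Zp w) : R)%:E).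

Definition L_n (P : probability Omega R) : R :=
  fine (\int[P]_w ((n%:R)^-1 * \sum_(i < n) zero_one_loss f (W w) (Zt i (U i w) w))%:E).

Definition gen_error (P : probability Omega R) : R := L_mu P - L_n P.

End supersample.

(* Main.v *)
Require Import Defs.
From HB Require Import structures.
From mathcomp Require Import all_boot all_order all_algebra.
From mathcomp Require Import all_classical all_reals all_analysis.
From mathcomp Require Import ring lra.
From mathcomp Require Import measurable_realfun.
Import Order.TTheory GRing.Theory Num.Theory.
Local Open Scope classical_set_scope.
Local Open Scope ring_scope.

Section proof.
Context (R : realType) (dO : measure_display) (Omega : measurableType dO) (P : probability Omega R)
  (dX dY dW : measure_display) (X : measurableType dX) (Y : measurableType dY)
  (Wt : measurableType dW) (n : nat)
  (mu : probability (X * Y)%type R) (f : Wt -> X -> Y)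
  (K : R.-pker (n.-tuple (X * Y)%type) ~> Wt)
  (Zt : 'I_n -> bool -> Omega -> (X * Y)%type) (U : 'I_n -> Omega -> bool)
  (Zp : Omega -> (X * Y)%type) (W : Omega -> Wt).
Hypotheses (mloss : measurable [set p : (Wt * (X * Y))%type | f p.1 p.2.1 != p.2.2])
  (mZt : forall i j, measurable_fun setT (Zt i j))
  (mU : forall i, measurable (U i @^-1` [set true]))
  (mZp : measurable_fun setT Zp)
  (mW : measurable_fun setT W)
  (indep : mutually_independent P (supersample_events Zt U Zp))
  (lawZt : forall i j B, measurable B -> P (Zt i j @^-1` B) = mu B)
  (lawZp : forall B, measurable B -> P (Zp @^-1` B) = mu B)
  (lawU : forall i, P (U i @^-1` [set true]) = (2^-1)%:E)
  (lawW : forall E, <<s supersample_generators Zt U Zp >> E ->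
     forall B, measurable B ->
     P (E `&` W @^-1` B) = (\int[P]_(w in E) K (train_sample Zt U w) B)%E)
  (interp : forall i : 'I_n,
     {ae P, forall w, zero_one_loss f (W w) (Zt i (U i w) w) = 0 :> R}).
Lemma mpre {d1} {T1 : measurableType d1} (g : Omega -> T1) (B : set T1) :
  measurable_fun setT g -> measurable B -> measurable (g @^-1` B).
Proof. by move=> mg mB; rewrite -[X in measurable X]setTI; exact: mg. Qed.

Lemma mUb i b : measurable (U i @^-1` [set b]).
Proof.
case: b; first exact: mU.
have -> : U i @^-1` [set false] = ~` (U i @^-1` [set true]).
  by apply/seteqP; split => w /=; case: (U i w).
exact/measurableC/mU.
Qed.

Lemma PUb i b : P (U i @^-1` [set b]) = (2^-1)%:E.
Proof.
case: b; first exact: lawU.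
have -> : U i @^-1` [set false] = ~` (U i @^-1` [set true]).
  by apply/seteqP; split => w /=; case: (U i w).
rewrite probability_setC ?lawU; last exact: mU.
rewrite -EFinB; congr EFin; lra.
Qed.

Definition T := train_sample Zt U.

Lemma mT : measurable_fun setT T.
Proof.
apply/measurable_fun_tnthP => k.
have -> : (tnth (T:=X * Y))^~ k \o T = fun w => Zt k (U k w) w.
  by apply/funext => w /=; rewrite /T /train_sample tnth_mktuple.
move=> _ B mB; rewrite setTI.
have -> : (fun w => Zt k (U k w) w) @^-1` B =
   (U k @^-1` [set true] `&` Zt k true @^-1` B) `|`
   (U k @^-1` [set false] `&` Zt k false @^-1` B).
  apply/seteqP; split => w /=.
    by case: (U k w) => h; [left|right].
  by case=> -[->].
by apply: measurableU; apply: measurableI; [exact: mUb|exact: mpre|exact: mUb|exact: mpre].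
Qed.
Definition cyl (A : 'I_n -> set (X * Y)%type) : set (n.-tuple (X * Y)%type) :=
  [set t | forall k, A k (tnth t k)].

Definition Zc (i : 'I_n) (b z : bool) : Omega -> (X * Y)%type :=
  if z then Zp else Zt i (~~ b).

Definition piece (A : 'I_n -> set (X * Y)%type) (Aset : set (X * Y)%type)
  (Z : Omega -> (X * Y)%type) (u : {ffun 'I_n -> bool}) : set Omega :=
  [set w | (forall k, U k w = u k /\ A k (Zt k (u k) w)) /\ Aset (Z w)].

Definition Aev (A : 'I_n -> set (X * Y)%type) (Aset : set (X * Y)%type)
  (i : 'I_n) (z : bool) (u : {ffun 'I_n -> bool}) (k : sidx n) : set Omega :=
  match k with
  | inl (inl (k, c)) => if c == u k then Zt k c @^-1` A k
                        else if ~~ z && (k == i) then Zt k c @^-1` Aset else setT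
  | inl (inr k) => U k @^-1` [set u k]
  | inr _ => if z then Zp @^-1` Aset else setT
  end.

Lemma piece_Aev A Aset i b z (u : {ffun 'I_n -> bool}) : u i = b ->
  piece A Aset (Zc i b z) u =
  \bigcap_(k in [set k | k \in [set: sidx n]%SET]) Aev A Aset i z u k.
Proof.
move=> uib; apply/seteqP; split => w /=.
  move=> [H HZ] [[[k c]|k]|[]] _ /=.
  - case: ifPn => [/eqP ->|cu]; first exact: (H k).2.
    case: ifPn => // /andP[zf /eqP ki]; subst k.
    move: zf HZ; rewrite /Zc; case: z => //= _.
    by move: cu; rewrite uib; case: c; case: (b).

  - exact: (H k).1.
  - by move: HZ; rewrite /Zc; case: z.
move=> H; split.
  move=> k; split.
    by have := H (inl (inr k)); apply; rewrite /= inE.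
  by have := H (inl (inl (k, u k))); rewrite /= eqxx; apply; rewrite /= inE.
rewrite /Zc; case: z H => H.
  by have := H (inr tt); apply; rewrite /= inE.
have := H (inl (inl (i, ~~ b))); rewrite /= uib eqxx.
by case: b {uib} => /=; apply; rewrite /= inE.
Qed.
Lemma Aev_events A Aset i z u : (forall k, measurable (A k)) -> measurable Aset ->
  forall k, k \in [set: sidx n]%SET -> supersample_events Zt U Zp k (Aev A Aset i z u k).
Proof.
move=> mA mAset [[[k c]|k]|[]] _ /=.
- case: ifP => _; first by exists (A k).
  case: ifP => _; first by exists Aset.
  by exists setT; split => //; rewrite preimage_setT.
- by exists [set u k].
- case: z; first by exists Aset.
  by exists setT; split => //; rewrite preimage_setT.
Qed.

Local Open Scope ereal_scope.
Lemma prod_pair (G : 'I_n * bool -> \bar R) :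
  \prod_p G p = \prod_(k < n) (G (k, true) * G (k, false)).
Proof.
transitivity (\prod_(k < n) \prod_(c : bool) G (k, c)).
  by rewrite pair_big; apply: eq_bigr => -[].
by apply: eq_bigr => k _; rewrite big_bool.
Qed.

Lemma Ppiece A Aset i b z (u : {ffun 'I_n -> bool}) : u i = b ->
  (forall k, measurable (A k)) -> measurable Aset ->
  P (piece A Aset (Zc i b z) u) =
  mu Aset * \prod_(k < n) mu (A k) * \prod_(k < n) (2^-1)%:E.
Proof.
move=> uib mA mAset.
rewrite piece_Aev //.
rewrite (indep [set: sidx n]%SET (Aev A Aset i z u) (Aev_events _ _ _ _ _ mA mAset)).
rewrite (eq_bigl xpredT); last by move=> k; rewrite /= inE.
rewrite big_sumType /= big_sumType /=.
have -> : \prod_(j : unit) P (if z then Zp @^-1` Aset else [set: Omega]) =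
    (if z then mu Aset else 1).
  rewrite (big_pred1 tt) //; try by case.
  by case: z; [rewrite lawZp|rewrite probability_setT].
have -> : \prod_(k < n) P (U k @^-1` [set u k]) = \prod_(k < n) (2^-1)%:E.
  by apply: eq_bigr => k _; exact: PUb.
rewrite prod_pair.
rewrite (eq_bigr (fun k => mu (A k) * (if ~~ z && (k == i) then mu Aset else 1))); last first.
  move=> k _ /=.
  case: (u k) => /=; case: ifP => _; rewrite ?lawZt ?probability_setT //.
  all: try by rewrite ?mule1 ?mul1e.
  all: try by rewrite muleC.
rewrite big_split /=.
have -> : \prod_(k < n) (if ~~ z && (k == i) then mu Aset else 1) =
    (if z then 1 else mu Aset).
  case: z => /=; first by rewrite big1.
  by rewrite (bigD1 i) //= eqxx big1 ?mule1 // => k /negbTE ->.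
case: z; rewrite ?mule1 ?mul1e.
  by rewrite muleC muleA.
by rewrite (muleC _ (mu Aset)).
Qed.
Lemma mAev A Aset i z u k : (forall k, measurable (A k)) -> measurable Aset ->
  measurable (Aev A Aset i z u k).
Proof.
move=> mA mAset; case: k => [[[k c]|k]|[]] /=.
- by case: ifP => _; [exact: mpre|case: ifP => _; [exact: mpre|exact: measurableT]].
- exact: mUb.
- by case: z; [exact: mpre|exact: measurableT].
Qed.

Definition cst_c A Aset := mu Aset * \prod_(k < n) mu (A k) * \prod_(k < n) (2^-1)%:E.

Lemma Pcyl A Aset i b z : (forall k, measurable (A k)) -> measurable Aset ->
  P (T @^-1` cyl A `&` (U i @^-1` [set b] `&` Zc i b z @^-1` Aset)) =
  \sum_(u \in [set u : {ffun 'I_n -> bool} | u i = b]) cst_c A Aset.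
Proof.
move=> mA mAset.
have -> : T @^-1` cyl A `&` (U i @^-1` [set b] `&` Zc i b z @^-1` Aset) =
    \bigcup_(u in [set u : {ffun 'I_n -> bool} | u i = b]) piece A Aset (Zc i b z) u.
  apply/seteqP; split => w /=.
    move=> [Hc [Hb HZ]]; exists [ffun k => U k w]; first by rewrite /= ffunE.
    split => // k; rewrite ffunE; split => //.
    by have := Hc k; rewrite /T /train_sample tnth_mktuple.
  move=> [u /= uib [H HZ]]; split; last by split => //=; rewrite (H i).1.
  by move=> k; rewrite /T /train_sample tnth_mktuple (H k).1; exact: (H k).2.
rewrite measure_fin_bigcup //.
- apply: eq_fsbigr => u; rewrite inE /= => uib.
  by rewrite Ppiece.
- exact: finite_finset.
- move=> u v _ _ [w [[Hu _] [Hv _]]]; apply/ffunP => k.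
  by rewrite -(Hu k).1 (Hv k).1.
- move=> u /= uib; rewrite piece_Aev //.
  apply: fin_bigcap_measurable; first exact: finite_finset.
  by move=> k _; exact: mAev.
Qed.

Lemma Pcyl_eq A Aset i b1 z1 b2 z2 : (forall k, measurable (A k)) -> measurable Aset ->
  P (T @^-1` cyl A `&` (U i @^-1` [set b1] `&` Zc i b1 z1 @^-1` Aset)) =
  P (T @^-1` cyl A `&` (U i @^-1` [set b2] `&` Zc i b2 z2 @^-1` Aset)).
Proof.
move=> mA mAset; rewrite !Pcyl //.
have [<-//|b12] := eqVneq b1 b2.
pose h (u : {ffun 'I_n -> bool}) := [ffun k => if k == i then ~~ u k else u k].
have hK : involutive h.
  by move=> u; apply/ffunP => k; rewrite !ffunE; case: eqP => // _; rewrite negbK.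
have -> : [set u : {ffun 'I_n -> bool} | u i = b1] =
    h @` [set u : {ffun 'I_n -> bool} | u i = b2].
  apply/seteqP; split => u /=.
    move=> uib; exists (h u); last exact: hK.
    by rewrite ffunE eqxx uib; move: b12; case: (b1); case: (b2).
  by move=> [v /= vib <-]; rewrite ffunE eqxx vib; move: b12; case: (b1); case: (b2).
rewrite fsbig_image //.
by move=> u v _ _ /(congr1 h); rewrite !hK.
Qed.
Definition Cyl : set (set (n.-tuple (X * Y)%type)) :=
  [set C | exists A, (forall k, measurable (A k)) /\ C = cyl A].

Lemma mcyl A : (forall k, measurable (A k)) -> measurable (cyl A).
Proof.
move=> mA.
have -> : cyl A = \bigcap_(k in [set: 'I_n]) ((@tnth n (X * Y)%type)^~ k @^-1` A k).
  by apply/seteqP; split => t /= H k; [move=> _|]; apply: H.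
apply: fin_bigcap_measurable; first exact: finite_finset.
move=> k _; rewrite -[X in measurable X]setTI; exact: measurable_tnth.
Qed.

Lemma tuple_gen : measurable = <<s Cyl >>.
Proof.
apply/seteqP; split.
  apply: smallest_sub; first exact: smallest_sigma_algebra.
  move=> C; rewrite -bigcup_seq => -[k _ [B mB <-]].
  apply: sub_sigma_algebra; exists (fun j => if j == k then B else setT); split.
    by move=> j; case: ifP.
  apply/seteqP; split => t /=.
    by move=> [_ tB] j; case: ifP => // /eqP ->.
  by move=> H; split => //; have := H k; rewrite eqxx.
apply: smallest_sub; first exact: sigma_algebra_measurable.
by move=> C [A [mA ->]]; exact: mcyl.
Qed.

Lemma Cyl_setI : setI_closed Cyl.
Proof.
move=> C1 C2 [A1 [mA1 ->]] [A2 [mA2 ->]].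
exists (fun k => A1 k `&` A2 k); split; first by move=> k; exact: measurableI.
by apply/seteqP; split => t /=; [move=> [H1 H2] k; split|move=> H; split => k; case: (H k)].
Qed.

Lemma Cyl_setT : Cyl setT.
Proof.
by exists (fun _ => setT); split => //; apply/seteqP; split.
Qed.

Local Open Scope ereal_scope.

Lemma integral_restr (F : set Omega) (mF : measurable F) (g : Omega -> \bar R) :
  measurable_fun setT g -> (forall x, 0 <= g x) ->
  \int[mrestr P mF]_x g x = \int[P]_(x in F) g x.
Proof.
move=> mg g0.
rewrite -(setUv F) ge0_integral_setU //.
all: try (by apply/disj_setPCl); try (by move=> x ?; exact: g0);
  try (exact: measurable_funTS); try (exact: measurableC).
have -> : \int[mrestr P mF]_(x in ~` F) g x = 0.
  rewrite (eq_measure_integral mzero) ?integral_measure_zero // => A mA AF.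
  rewrite /= /mrestr.
  have -> : A `&` F = set0 by apply/seteqP; split => x // [/AF].
  exact: measure0.
rewrite adde0; apply: eq_measure_integral => A mA AF.
by rewrite /= /mrestr setIidl.
Qed.

Lemma int_eq (F1 F2 : set Omega) (mF1 : measurable F1) (mF2 : measurable F2)
  (h : n.-tuple (X * Y)%type -> \bar R) :
  measurable_fun setT h -> (forall x, 0 <= h x) ->
  (forall D, measurable D -> P (T @^-1` D `&` F1) = P (T @^-1` D `&` F2)) ->
  \int[P]_(w in F1) h (T w) = \int[P]_(w in F2) h (T w).
Proof.
move=> mh h0 HD.
have mhT : measurable_fun setT (h \o T) by exact: measurableT_comp mh mT.
rewrite -(@integral_restr F1 mF1 (h \o T) mhT (fun x => h0 _)).
rewrite -(@integral_restr F2 mF2 (h \o T) mhT (fun x => h0 _)).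
have E (F : set Omega) (mF : measurable F) :
    \int[mrestr P mF]_x (h \o T) x = \int[pushforward (mrestr P mF) T]_(y in setT) h y.
  rewrite ge0_integral_pushforward //; last exact: mT.
rewrite (E _ mF1) (E _ mF2).
apply: eq_measure_integral; try exact: mT.
move=> mf1 mf2 A mA _; exact: HD.
Qed.
Definition Fset i b z Aset := U i @^-1` [set b] `&` Zc i b z @^-1` Aset.

Lemma mZc i b z : measurable_fun setT (Zc i b z).
Proof. by rewrite /Zc; case: z. Qed.

Lemma mFset i b z Aset : measurable Aset -> measurable (Fset i b z Aset).
Proof. by move=> mA; apply: measurableI; [exact: mUb|exact: mpre (mZc _ _ _) mA]. Qed.

Lemma push_eq i b1 z1 b2 z2 Aset (mAset : measurable Aset) D : measurable D ->
  P (T @^-1` D `&` Fset i b1 z1 Aset) = P (T @^-1` D `&` Fset i b2 z2 Aset).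
Proof.
move=> mD.
have mF1 := mFset i b1 z1 Aset mAset; have mF2 := mFset i b2 z2 Aset mAset.
apply: (measure_unique Cyl (fun=> setT) tuple_gen Cyl_setI (fun=> Cyl_setT) _
  (pushforward (mrestr P mF1) T) (pushforward (mrestr P mF2) T)); try exact: mT.
- by rewrite bigcup_const //; exists 0%N.
- by move=> ? ? C [A [mA ->]]; exact: Pcyl_eq.
- move=> ? k; apply: (le_lt_trans _ (ltry 1%R)).
  change (P (T @^-1` setT `&` Fset i b1 z1 Aset) <= 1).
  by apply: probability_le1; apply: measurableI => //; exact: mpre mT measurableT.
all: try exact: mD.
Qed.
Lemma gen_setI (A B : set Omega) :
  <<s supersample_generators Zt U Zp >> A -> <<s supersample_generators Zt U Zp >> B ->
  <<s supersample_generators Zt U Zp >> (A `&` B).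
Proof.
move=> hA hB.
exact: (@measurableI _ (g_sigma_algebraType (supersample_generators Zt U Zp)) _ _ hA hB).
Qed.

Lemma G_Fset i b z Aset : measurable Aset ->
  <<s supersample_generators Zt U Zp >> (Fset i b z Aset).
Proof.
move=> mA; apply: gen_setI; apply: sub_sigma_algebra.
  by exists (inl (inr i)); exists [set b].
rewrite /Zc; case: z.
  by exists (inr tt); exists Aset.
by exists (inl (inl (i, ~~ b))); exists Aset.
Qed.

Definition WZ i b z := fun w => (W w, Zc i b z w).

Lemma mWZ i b z : measurable_fun setT (WZ i b z).
Proof. exact: measurable_fun_pair mW (mZc i b z). Qed.

Lemma joint_eq i b1 z1 b2 z2 C : measurable C ->
  P (WZ i b1 z1 @^-1` C `&` U i @^-1` [set b1]) =
  P (WZ i b2 z2 @^-1` C `&` U i @^-1` [set b2]).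
Proof.
move=> mC.
have mE1 := mUb i b1; have mE2 := mUb i b2.
apply: (measure_unique [set B `*` A | B in measurable & A in measurable] (fun=> setT)
  (measurable_prod_measurableType _ _) _ _ _
  (pushforward (mrestr P mE1) (WZ i b1 z1)) (pushforward (mrestr P mE2) (WZ i b2 z2)));
  try exact: mWZ.
- move=> _ _ [B1 mB1 [A1 mA1 <-]] [B2 mB2 [A2 mA2 <-]].
  exists (B1 `&` B2); first exact: measurableI.
  by exists (A1 `&` A2); [exact: measurableI|rewrite setXI].
- move=> _; exists setT => //; exists setT => //; exact: setXTT.
- by rewrite bigcup_const //; exists 0%N.
- move=> ? ? _ [B mB [A mA <-]].
  change (P (WZ i b1 z1 @^-1` (B `*` A) `&` U i @^-1` [set b1]) =
          P (WZ i b2 z2 @^-1` (B `*` A) `&` U i @^-1` [set b2])).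
  have HS b z : WZ i b z @^-1` (B `*` A) `&` U i @^-1` [set b] =
      Fset i b z A `&` W @^-1` B.
    by apply/seteqP; split => w /=; [move=> [[? ?] ?]|move=> [[? ?] ?]].
  rewrite !HS (lawW _ (G_Fset _ _ _ _ mA) _ mB) (lawW _ (G_Fset _ _ _ _ mA) _ mB).
  have := @int_eq (Fset i b1 z1 A) (Fset i b2 z2 A) (mFset _ _ _ _ mA) (mFset _ _ _ _ mA)
    (fun t => K t B) (measurable_kernel K B mB) (fun t => measure_ge0 _ _)
    (fun D mD => push_eq i b1 z1 b2 z2 A mA D mD).
  exact.
- move=> ? k; apply: (le_lt_trans _ (ltry 1%R)).
  change (P (WZ i b1 z1 @^-1` setT `&` U i @^-1` [set b1]) <= 1).
  by apply: probability_le1; apply: measurableI => //; exact: mpre (mWZ _ _ _) measurableT.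
all: try exact: mC.
Qed.
Lemma ae_event (S1 S2 : set Omega) : measurable S1 -> measurable S2 ->
  {ae P, forall w, S1 w <-> S2 w} -> P S1 = P S2.
Proof.
move=> m1 m2 [N [mN PN sub]].
have E (S : set Omega) : measurable S -> P S = P (S `&` ~` N).
  move=> mS.
  transitivity (P ((S `&` ~` N) `|` (S `&` N))).
    by congr (P _); apply/seteqP; split => w;
      [case: (pselect (N w)) => ? ?; [right|left]|case=> -[]].
  rewrite measureU; [|by apply: measurableI => //; exact: measurableC|exact: measurableI|
    by apply/seteqP; split => w // [[_ ?] [_ ?]]].
  rewrite [X in (_ + X)%E](_ : _ = 0) ?adde0 //.
  apply/eqP; rewrite eq_le measure_ge0 andbT -PN le_measure // inE //.
  exact: measurableI.
rewrite (E _ m1) (E _ m2); congr (P _).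
apply/seteqP; split => w [h hN]; split => //.
  have : S1 w <-> S2 w by apply: contrapT => H; exact: hN (sub w H).
  by case=> /(_ h).
have : S1 w <-> S2 w by apply: contrapT => H; exact: hN (sub w H).
by case=> _ /(_ h).
Qed.
Definition Closs := [set p : (Wt * (X * Y))%type | f p.1 p.2.1 != p.2.2].
Definition lb i j w := f (W w) (Zt i j w).1 != (Zt i j w).2.

Lemma mbool (h : Omega -> bool) bb : measurable (h @^-1` [set true]) ->
  measurable (h @^-1` [set bb]).
Proof.
move=> mh; case: bb => //.
have -> : h @^-1` [set false] = ~` (h @^-1` [set true]).
  by apply/seteqP; split => w /=; case: (h w).
exact: measurableC.
Qed.

Lemma mlb i j : measurable (lb i j @^-1` [set true]).
Proof.
have -> : lb i j @^-1` [set true] = WZ i (~~ j) false @^-1` Closs.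
  by apply/seteqP; split => w /=; rewrite /WZ /Zc /= negbK.
exact: mpre (mWZ _ _ _) mloss.
Qed.

Lemma mbool2 (a c : Omega -> bool) (g : bool -> bool -> Prop) :
  measurable (a @^-1` [set true]) -> measurable (c @^-1` [set true]) ->
  measurable [set w | g (a w) (c w)].
Proof.
move=> ma mc.
pose S b1 b2 := if `[< g b1 b2 >] then a @^-1` [set b1] `&` c @^-1` [set b2] else set0.
have mS b1 b2 : measurable (S b1 b2).
  rewrite /S; case: ifP => _ //.
  by apply: measurableI; apply: mbool.
have -> : [set w | g (a w) (c w)] = S true true `|` S true false `|` S false true `|` S false false.
  apply/seteqP; split => w /=.
    case ha: (a w); case hc: (c w) => H.
    - by left; left; left; rewrite /S asboolT.
    - by left; left; right; rewrite /S asboolT.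
    - by left; right; rewrite /S asboolT.
    - by right; rewrite /S asboolT.
  rewrite /S; move=> [[[|]|]|]; case: asboolP => // Hg [/= -> ->] //.
by repeat apply: measurableU.
Qed.

Lemma mDelta i (x : R) : measurable (DeltaL Zt W f i @^-1` [set x]).
Proof.
exact: (@mbool2 (lb i true) (lb i false)
  (fun b1 b2 => ((if b1 then 1 else 0) - (if b2 then 1 else 0) = x)%R) (mlb i true) (mlb i false)).
Qed.

Lemma ae_interp i : {ae P, forall w,
  (U i w = false -> ~~ lb i false w) /\ (U i w = true -> ~~ lb i true w)}.
Proof.
apply: filterS (interp i) => w /=; rewrite /zero_one_loss /lb.
case: (U i w) => H; split => // _; apply/negP => Hl; move: H; rewrite Hl;
  by move/eqP; rewrite oner_eq0.
Qed.

Lemma cell i (x : R) b (S2 : set Omega) : measurable S2 ->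
  (forall w, (U i w = false -> ~~ lb i false w) -> (U i w = true -> ~~ lb i true w) ->
     ((DeltaL Zt W f i @^-1` [set x] `&` U i @^-1` [set b]) w <-> S2 w)) ->
  P (DeltaL Zt W f i @^-1` [set x] `&` U i @^-1` [set b]) = P S2.
Proof.
move=> mS2 H; apply: ae_event => //.
  by apply: measurableI; [exact: mDelta|exact: mUb].
by apply: filterS (ae_interp i) => w [h0 h1]; exact: H.
Qed.

Lemma marg i (x : R) : P (DeltaL Zt W f i @^-1` [set x]) =
  P (DeltaL Zt W f i @^-1` [set x] `&` U i @^-1` [set false]) +
  P (DeltaL Zt W f i @^-1` [set x] `&` U i @^-1` [set true]).
Proof.
rewrite -measureU; first last.
- by apply/seteqP; split => w // [[_ /= ->] [_ /=]].
- by apply: measurableI; [exact: mDelta|exact: mUb].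
- by apply: measurableI; [exact: mDelta|exact: mUb].
congr (P _); apply/seteqP; split => w /=.
  by case hu: (U i w) => H; [right|left].
by case=> -[].
Qed.
Ltac cellt :=
  let w := fresh "w" in
  move=> w; rewrite /DeltaL /Lij /zero_one_loss /lb /WZ /Zc /Closs /=;
  move: (f (W w) (Zt _ true w).1 != (Zt _ true w).2)
        (f (W w) (Zt _ false w).1 != (Zt _ false w).2) (U _ w);
  case; case; case => /= h0 h1;
  intuition (try lra; try discriminate; try congruence).

Lemma cell_m1f i : P (DeltaL Zt W f i @^-1` [set (-1 : R)%R] `&` U i @^-1` [set false]) = 0.
Proof.
rewrite (@cell i (-1 : R)%R false set0) ?measure0 //.
cellt.
Qed.

Lemma mWZC i b z : measurable (WZ i b z @^-1` Closs).
Proof. exact: mpre (mWZ _ _ _) mloss. Qed.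

Lemma cell_1t i : P (DeltaL Zt W f i @^-1` [set (1 : R)%R] `&` U i @^-1` [set true]) = 0.
Proof.
rewrite (@cell i (1 : R)%R true set0) ?measure0 //.
cellt.
Qed.

Lemma cell_0f i : P (DeltaL Zt W f i @^-1` [set (0 : R)%R] `&` U i @^-1` [set false]) =
  P (U i @^-1` [set false] `\` WZ i false false @^-1` Closs).
Proof.
rewrite (@cell i (0 : R)%R false (U i @^-1` [set false] `\` WZ i false false @^-1` Closs)) //; first by apply: measurableD; [exact: mUb|exact: mWZC].
cellt.
Qed.

Lemma cell_0t i : P (DeltaL Zt W f i @^-1` [set (0 : R)%R] `&` U i @^-1` [set true]) =
  P (U i @^-1` [set true] `\` WZ i true false @^-1` Closs).
Proof.
rewrite (@cell i (0 : R)%R true (U i @^-1` [set true] `\` WZ i true false @^-1` Closs)) //; first by apply: measurableD; [exact: mUb|exact: mWZC].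
cellt.
Qed.

Lemma cell_1f i : P (DeltaL Zt W f i @^-1` [set (1 : R)%R] `&` U i @^-1` [set false]) =
  P (WZ i false false @^-1` Closs `&` U i @^-1` [set false]).
Proof.
rewrite (@cell i (1 : R)%R false (WZ i false false @^-1` Closs `&` U i @^-1` [set false])) //; first by apply: measurableI; [exact: mWZC|exact: mUb].
cellt.
Qed.

Lemma cell_m1t i : P (DeltaL Zt W f i @^-1` [set (-1 : R)%R] `&` U i @^-1` [set true]) =
  P (WZ i true false @^-1` Closs `&` U i @^-1` [set true]).
Proof.
rewrite (@cell i (-1 : R)%R true (WZ i true false @^-1` Closs `&` U i @^-1` [set true])) //; first by apply: measurableI; [exact: mWZC|exact: mUb].
cellt.
Qed.
Lemma mind (b : Omega -> bool) : measurable (b @^-1` [set true]) ->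
  measurable_fun setT (fun w => (if b w then 1%R else 0%R : R)).
Proof.
move=> mb.
have -> : (fun w => (if b w then 1%R else 0%R : R)) = \1_(b @^-1` [set true]).
  apply/funext => w; rewrite indicE; case: ifPn => h.
    by rewrite mem_set.
  by rewrite memNset //= => /eqP; rewrite (negbTE h).
exact: measurable_indic.
Qed.

Lemma Ln0 : L_n Zt U W f P = 0%R.
Proof.
rewrite /L_n.
rewrite (ae_eq_integral (cst 0)) // ?integral0 //.
- apply/measurable_EFinP; apply: measurable_funM => //.
  apply: measurable_sum => i; apply: (@mind (fun w => lb i (U i w) w)).
  have -> : (fun w => lb i (U i w) w) @^-1` [set true] =
    (U i @^-1` [set true] `&` lb i true @^-1` [set true]) `|`
    (U i @^-1` [set false] `&` lb i false @^-1` [set true]).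
    apply/seteqP; split => w /=; first by case: (U i w) => h; [left|right].
    by case=> -[->].
  by apply: measurableU; apply: measurableI; (exact: mUb || exact: mlb).
- apply: filterS (filter_forall _ interp) => w H _ /=.
  by rewrite big1 ?mulr0 // => i _; exact: H.
Qed.

Definition q i := P (WZ i false true @^-1` Closs `&` U i @^-1` [set false]).

Lemma qfin i : q i = (fine (q i))%:E.
Proof.
rewrite fineK // /q; apply: fin_num_measure.
by apply: measurableI; [exact: mWZC|exact: mUb].
Qed.

Lemma Lmu_eq i : L_mu Zp W f P = (2 * fine (q i))%R.
Proof.
rewrite /L_mu.
have -> : \int[P]_w (zero_one_loss f (W w) (Zp w))%:E = P (WZ i false true @^-1` Closs).
  rewrite -(setIT (WZ i false true @^-1` Closs)).
  rewrite -integral_indic //; last exact: mWZC.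
  apply: eq_integral => w _; rewrite indicE /zero_one_loss /WZ /Zc /Closs.
  case: ifPn => h; first by rewrite mem_set.
  by rewrite memNset //=; apply/negP.
have -> : WZ i false true @^-1` Closs =
    (WZ i false true @^-1` Closs `&` U i @^-1` [set false]) `|`
    (WZ i true true @^-1` Closs `&` U i @^-1` [set true]).
  apply/seteqP; split => w /=; first by case: (U i w) => h; [right|left].
  by case=> -[].
rewrite measureU; first last.
- by apply/seteqP; split => w // [[_ /= ->] [_ /=]].
- by apply: measurableI; [exact: mWZC|exact: mUb].
- by apply: measurableI; [exact: mWZC|exact: mUb].
rewrite [X in (_ + X)%E](_ : _ = q i); last exact: (joint_eq i true true false true Closs mloss).
rewrite [X in (X + _)%E](_ : _ = q i) // qfin -EFinD /=.
by rewrite mulr2n mulrDl mul1r.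
Qed.
Lemma finP (A : set Omega) : measurable A -> (P A < +oo)%E.
Proof. by move=> mA; apply: (le_lt_trans (probability_le1 P mA) (ltry 1%R)). Qed.

Section per_i.
Variable i : 'I_n.
Let qr := fine (q i).
Let D (x : R) b := DeltaL Zt W f i @^-1` [set x] `&` U i @^-1` [set b].

Lemma pE b : prR P (U i @^-1` [set b]) = 2^-1%R.
Proof. by rewrite /prR PUb. Qed.

Lemma pc_m1f : prR P (D (-1)%R false) = 0%R.
Proof. by rewrite /prR /D cell_m1f. Qed.

Lemma pc_1t : prR P (D 1%R true) = 0%R.
Proof. by rewrite /prR /D cell_1t. Qed.

Lemma pc_1f : prR P (D 1%R false) = qr.
Proof. by rewrite /prR /D cell_1f (joint_eq i false false false true Closs mloss). Qed.

Lemma pc_m1t : prR P (D (-1)%R true) = qr.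
Proof. by rewrite /prR /D cell_m1t (joint_eq i true false false true Closs mloss). Qed.

Lemma pc_0 b : prR P (D 0%R b) = (2^-1 - qr)%R.
Proof.
rewrite /prR /D; case: b; [rewrite cell_0t|rewrite cell_0f].
  rewrite measureD; [|exact: mUb|exact: mWZC|exact: finP (mUb _ _)].
  rewrite setIC [X in (_ - X)%E](_ : _ = q i); last exact: (joint_eq i true false false true Closs mloss).
  by rewrite [X in (X - _)%E](PUb i true) qfin -EFinB.
rewrite measureD; [|exact: mUb|exact: mWZC|exact: finP (mUb _ _)].
rewrite setIC [X in (_ - X)%E](_ : _ = q i); last exact: (joint_eq i false false false true Closs mloss).
by rewrite [X in (X - _)%E](PUb i false) qfin -EFinB.
Qed.

Lemma pmarg (x : R) : prR P (DeltaL Zt W f i @^-1` [set x]) = (prR P (D x false) + prR P (D x true))%R.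
Proof.
rewrite /prR marg fineD //; apply: fin_num_measure; apply: measurableI;
  (exact: mDelta || exact: mUb).
Qed.

End per_i.
Local Open Scope ring_scope.
Lemma alpha_eq i : alpha Zt U W f P i = (1 - 2 * fine (q i))%R /\
  alpha1 Zt U W f P i = (1 - 2 * fine (q i))%R.
Proof.
rewrite /alpha /alpha1.
have := pc_0 i false; have := pc_0 i true; rewrite /= => -> ->.
by rewrite !pE; split; field.
Qed.

Lemma MI_eq i : MI_DeltaL_U Zt U W f P i = (2 * fine (q i) * ln 2)%R.
Proof.
rewrite /MI_DeltaL_U /mutual_info !big_cons !big_nil /=.
rewrite !pmarg pc_m1f pc_1t pc_1f pc_m1t !pc_0 !pE.
set r := fine (q i).
rewrite !eqxx !add0r !addr0.
have Hr : (if r == 0 then 0 else r * ln (r / (r * 2^-1))) = r * ln 2.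
  have [->|rn] := eqVneq r 0; first by rewrite mul0r.
  by congr (_ * ln _); field.
have Hh : (if (2^-1 - r) == 0 then 0 else (2^-1 - r) * ln ((2^-1 - r) / (((2^-1 - r) + (2^-1 - r)) * 2^-1))) = 0.
  have [//|hn] := eqVneq (2^-1 - r) 0.
  rewrite (_ : _ / _ = 1) ?ln1 ?mulr0 //; field.
  by move: hn; apply: contra => /eqP h; apply/eqP; lra.
rewrite Hr Hh.
ring.
Qed.

Lemma final (n_gt0 : (0 < n)%N) :
  (forall i : 'I_n,
     alpha Zt U W f P i = alpha1 Zt U W f P i /\
     MI_DeltaL_U Zt U W f P i = (1 - alpha Zt U W f P i) * ln 2) /\
  `|gen_error Zt U Zp W f P| = L_mu Zp W f P /\
  L_mu Zp W f P = \sum_(i < n) MI_DeltaL_U Zt U W f P i / (n%:R * ln 2).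
Proof.
have ln2 : ln (2 : R) != 0 by rewrite gt_eqF // ln_gt0 // ltr1n.
split.
  move=> i; have [-> ->] := alpha_eq i; split => //; rewrite MI_eq; ring.
have Lge0 : 0 <= L_mu Zp W f P.
  rewrite (Lmu_eq (Ordinal n_gt0)) mulr_ge0 // fine_ge0 // measure_ge0 //.
split.
  by rewrite /gen_error Ln0 subr0 ger0_norm.
rewrite (eq_bigr (fun _ => L_mu Zp W f P * ln 2 / (n%:R * ln 2))); last first.
  by move=> i _; rewrite MI_eq (Lmu_eq i).
rewrite sumr_const card_ord -mulr_natr.
have nn : (n%:R : R) != 0 by rewrite pnatr_eq0 -lt0n.
by field; rewrite mul1r ln2 nn.
Qed.

End proof.

Theorem theorem3 (R : realType)
  (dO : measure_display) (Omega : measurableType dO) (P : probability Omega R)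
  (dX dY dW : measure_display) (X : measurableType dX) (Y : measurableType dY)
  (Wt : measurableType dW) (n : nat) (n_gt0 : (0 < n)%N)
  (mu : probability (X * Y)%type R)
  (f : Wt -> X -> Y)
  (K : R.-pker (n.-tuple (X * Y)%type) ~> Wt)
  (Zt : 'I_n -> bool -> Omega -> (X * Y)%type) (U : 'I_n -> Omega -> bool)
  (Zp : Omega -> (X * Y)%type) (W : Omega -> Wt)
  (* measurability *)
  (mloss : measurable [set p : (Wt * (X * Y))%type | f p.1 p.2.1 != p.2.2])
  (mZt : forall i j, measurable_fun setT (Zt i j))
  (mU : forall i, measurable (U i @^-1` [set true]))
  (mZp : measurable_fun setT Zp)
  (mW : measurable_fun setT W)
  (* Zt_{i,j}, U_i, Z' mutually independent, with laws mu, uniform, mu *)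
  (indep : mutually_independent P (supersample_events Zt U Zp))
  (lawZt : forall i j B, measurable B -> P (Zt i j @^-1` B) = mu B)
  (lawZp : forall B, measurable B -> P (Zp @^-1` B) = mu B)
  (lawU : forall i, P (U i @^-1` [set true]) = (2^-1)%:E)
  (* W = A(Zt_U): conditionally on (Zt, U, Z'), W has law K(Zt_U) *)
  (lawW : forall E, <<s supersample_generators Zt U Zp >> E ->
     forall B, measurable B ->
     P (E `&` W @^-1` B) = (\int[P]_(w in E) K (train_sample Zt U w) B)%E)
  (* interpolation: zero training error almost surely *)
  (interp : forall i : 'I_n,
     {ae P, forall w, zero_one_loss f (W w) (Zt i (U i w) w) = 0 :> R}) :
  (forall i : 'I_n,
     alpha Zt U W f P i = alpha1 Zt U W f P i /\
     MI_DeltaL_U Zt U W f P i = (1 - alpha Zt U W f P i) * ln 2) /\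
  `|gen_error Zt U Zp W f P| = L_mu Zp W f P /\
  L_mu Zp W f P = \sum_(i < n) MI_DeltaL_U Zt U W f P i / (n%:R * ln 2).
Proof.
exact: (@final R dO Omega P dX dY dW X Y Wt n mu f K Zt U Zp W mloss mZt mU mZp mW indep lawZt lawZp lawU lawW interp n_gt0).
Qed.
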